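(* Let $F$ be an indexed group with degree map $\deg$, $G$ a group, $H\le G$, and $\Phi$ a set of homomorphisms $F\to G$ satisfying: (I) if $h\in H$ and $\varphi\in\Phi$ then $f\mapsto h^{-1}\varphi(f)h$ lies in $\Phi$; (II) for any $\varphi\in\Phi$ and $h\in H_\varphi$, the homomorphism $\psi$ with $\psi(f)=\varphi(f)$ for $\deg f=0$ and $\psi(f_1)=\varphi(f_1)h$ for a degree-one element $f_1$ lies in $\Phi$. Then each similarity class in $\Phi$ consists of exactly $|H|$ elements. More precisely, for each $\varphi\in\Phi$: 1) the number of distinct tails of elements of $\Phi$ similar to $\varphi$ equals $|H:H_\varphi|$; 2) for each $\psi\in\Phi$ similar to $\varphi$, the number of elements of $\Phi$ with the same tail as $\psi$ equals $|H_\varphi|$.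
   Context: An indexed group is a group $F$ with a surjective homomorphism $\deg: F\to\mathbb{Z}$. Notation: $x^y=y^{-1}xy$, $H^y=y^{-1}Hy$, $C(X)$ is the centraliser. The $\varphi$-core of $H$ is $H_\varphi=\bigcap_{f\in F}H^{\varphi(f)}\cap C(\{\varphi(f)\mid\deg f=0\})$. The tail of $\varphi\in\Phi$ is the pair $(\varphi_0,\varphi_H)$, where $\varphi_0$ is the restriction of $\varphi$ to $\ker\deg$ and $\varphi_H$ is the map from $F$ to the set of left cosets of $H$ in $G$ sending $f$ to $\varphi(f)H$. Two homomorphisms $\varphi,\psi\in\Phi$ are similar if there is $h\in H$ with $\psi(f)=h\varphi(f)h^{-1}$ for all $f$ of degree zero and $\psi(f)H=h\varphi(f)H$ for all $f\in F$. Cardinalities are cardinal numbers (groups need not be finite). *)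

(* Defs.v *)
From mathcomp Require Import all_boot all_order all_algebra.
From mathcomp Require Import boolp classical_sets functions cardinality.
Set Implicit Arguments. Unset Strict Implicit. Unset Printing Implicit Defensive.
Import GRing.Theory Num.Theory.
Local Open Scope classical_set_scope.

Record grp := Grp {
  gcar :> Type;
  gmul : gcar -> gcar -> gcar;
  gone : gcar;
  ginv : gcar -> gcar;
  gmulA : forall x y z, gmul x (gmul y z) = gmul (gmul x y) z;
  gmul1 : forall x, gmul gone x = x;
  gmulV : forall x, gmul (ginv x) x = gone }.

Arguments gmul {g}. Arguments gone {g}. Arguments ginv {g}.

Definition is_hom (F G : grp) (phi : F -> G) : Prop :=
  forall x y, phi (gmul x y) = gmul (phi x) (phi y).

Definition is_subgroup (G : grp) (H : set G) : Prop :=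
  H gone /\ (forall x y, H x -> H y -> H (gmul x y)) /\ (forall x, H x -> H (ginv x)).

Definition is_degree (F : grp) (deg : F -> int) : Prop :=
  (forall x y, deg (gmul x y) = (deg x + deg y)%R) /\ (forall n : int, exists f, deg f = n).

Definition lcoset (G : grp) (x : G) (H : set G) : set G := [set gmul x h | h in H].

(* phi-phi_core: H_phi = (bigcap_f H^{phi f}) cap C({phi f | deg f = 0}),
   where H^y = y^-1 H y; x \in H^y iff y x y^-1 \in H *)
Definition phi_core (F G : grp) (deg : F -> int) (H : set G) (phi : F -> G) : set G :=
  [set x | (forall f : F, H (gmul (phi f) (gmul x (ginv (phi f))))) /\
           (forall f : F, deg f = 0%R -> gmul x (phi f) = gmul (phi f) x)].

Definition hom_tail (F G : grp) (deg : F -> int) (H : set G) (phi : F -> G) :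
  ({f : F | deg f = 0%R} -> G) * (F -> set G) :=
  (fun f => phi (proj1_sig f), fun f => lcoset (phi f) H).

Definition similar_hom (F G : grp) (deg : F -> int) (H : set G) (phi psi : F -> G) : Prop :=
  exists2 h, H h &
    (forall f, deg f = 0%R -> psi f = gmul h (gmul (phi f) (ginv h))) /\
    (forall f, lcoset (psi f) H = lcoset (gmul h (phi f)) H).

(* Main.v *)
Require Import Defs.
From mathcomp Require Import all_boot all_order all_algebra.
From mathcomp Require Import boolp classical_sets functions cardinality.
From mathcomp Require Import zify.
Set Implicit Arguments. Unset Strict Implicit. Unset Printing Implicit Defensive.
Import GRing.Theory Num.Theory.
Local Open Scope classical_set_scope.
Local Open Scope card_scope.

Section GB.
Variable G : grp.
Implicit Types x y z : G.
Lemma XmulKg x y : gmul (ginv x) (gmul x y) = y.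
Proof. by rewrite gmulA gmulV gmul1. Qed.
Lemma XmulgV x : gmul x (ginv x) = gone.
Proof.
have h := XmulKg (ginv x) (gmul x (ginv x)).
by rewrite (gmulA (ginv x) x) gmulV gmul1 gmulV in h.
Qed.
Lemma Xmulg1 x : gmul x gone = x.
Proof. by rewrite -(gmulV x) gmulA XmulgV gmul1. Qed.
Lemma XginvK x : ginv (ginv x) = x.
Proof. by rewrite -[RHS](XmulKg (ginv x) x) gmulV Xmulg1. Qed.
Lemma XmulKVg x y : gmul x (gmul (ginv x) y) = y.
Proof. by rewrite gmulA XmulgV gmul1. Qed.
Lemma XmulgK x y : gmul (gmul y x) (ginv x) = y.
Proof. by rewrite -gmulA XmulgV Xmulg1. Qed.
Lemma XmulgKV x y : gmul (gmul y (ginv x)) x = y.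
Proof. by rewrite -gmulA gmulV Xmulg1. Qed.
Lemma Xinv_uniq x y : gmul x y = gone -> ginv y = x.
Proof. by move=> h; rewrite -[x]Xmulg1 -(XmulgV y) gmulA h gmul1. Qed.
Lemma XginvM x y : ginv (gmul x y) = gmul (ginv y) (ginv x).
Proof. by apply: Xinv_uniq; rewrite gmulA XmulgKV gmulV. Qed.
Lemma Xginv1 : ginv (@gone G) = gone.
Proof. by apply: Xinv_uniq; rewrite gmul1. Qed.
Lemma Xcancl x y z : gmul z x = gmul z y -> x = y.
Proof. by move=> h; rewrite -(XmulKg z x) h XmulKg. Qed.
Lemma Xcancr x y z : gmul x z = gmul y z -> x = y.
Proof. by move=> h; rewrite -(XmulgK z x) h XmulgK. Qed.
End GB.

Section Hom.
Variables (F G : grp) (phi : F -> G).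
Hypothesis hphi : is_hom phi.
Lemma Xhom1 : phi gone = gone.
Proof. apply: (@Xcancl _ _ _ (phi gone)); by rewrite -hphi gmul1 Xmulg1. Qed.
Lemma XhomV x : phi (ginv x) = ginv (phi x).
Proof. by apply: esym; apply: Xinv_uniq; rewrite -hphi gmulV Xhom1. Qed.
End Hom.


Lemma int_ind2 (P : int -> Prop) : P 0%R -> (forall z, P z -> P (z + 1)%R) ->
  (forall z, P z -> P (z - 1)%R) -> forall z, P z.
Proof.
move=> P0 Ps Pp; elim/int_rect => // n IH.
  by rewrite -addn1 PoszD; apply: Ps.
by rewrite -addn1 PoszD opprD; apply: Pp.
Qed.

Section Pw.
Variable G : grp.
Definition pw (a : G) (z : int) : G :=
  match z with
  | Posz n => iter n (fun y => gmul y a) gone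
  | Negz n => iter n.+1 (fun y => gmul y (ginv a)) gone
  end.
Lemma pwS a z : pw a (z + 1)%R = gmul (pw a z) a.
Proof.
case: z => [n|[|n]].
- by rewrite -PoszD addn1 /= .
- by rewrite /= gmul1 gmulV.
- have -> : (Negz n.+1 + 1)%R = Negz n by rewrite !NegzE; lia.
  by rewrite /= XmulgKV.
Qed.
Lemma pwP a z : pw a (z - 1)%R = gmul (pw a z) (ginv a).
Proof. by rewrite -[in RHS](subrK 1%R z) pwS XmulgK. Qed.
Lemma pw0 a : pw a 0%R = gone. Proof. by []. Qed.
Lemma pw1 a : pw a 1%R = a. Proof. by rewrite /= gmul1. Qed.
Lemma pwN1 a : pw a (-1)%R = ginv a. Proof. by rewrite /= gmul1. Qed.
Lemma pwD a m n : pw a (m + n)%R = gmul (pw a m) (pw a n).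
Proof.
elim/int_ind2: n => [|n IH|n IH]; first by rewrite addr0 pw0 Xmulg1.
  by rewrite addrA !pwS IH gmulA.
by rewrite addrA !pwP IH gmulA.
Qed.
Lemma pwN a n : pw a (- n)%R = ginv (pw a n).
Proof. by apply: esym; apply: Xinv_uniq; rewrite -pwD addNr. Qed.
End Pw.

Lemma hom_pw (F G : grp) (phi : F -> G) a z : is_hom phi -> phi (pw a z) = pw (phi a) z.
Proof.
move=> hphi; elim/int_ind2: z => [|n IH|n IH]; first exact: Xhom1.
  by rewrite !pwS hphi IH.
by rewrite !pwP hphi IH XhomV.
Qed.


Definition rep (T : Type) (d : T) (C : set T) : T :=
  match pselect (exists y, C y) with left e => proj1_sig (cid e) | right _ => d end.
Lemma repP T (d : T) (C : set T) : (exists y, C y) -> C (rep d C).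
Proof. by move=> e; rewrite /rep; case: pselect => // e'; exact: proj2_sig. Qed.

Lemma img_kernel {T U V} (A : set T) (f : T -> U) (g : T -> V) :
 (forall x y, A x -> A y -> (f x = f y <-> g x = g y)) -> f @` A #= g @` A.
Proof.
move=> hk.
case: (pselect (exists x, A x)) => [[x0 Ax0]|nA]; last first.
  have A0 : A = set0.
    rewrite eqEsubset; split => x; last by []. by move=> Ax; exfalso; apply: nA; exists x.
  rewrite A0 !image_set0; exact: card_eq00.
pose r := fun v => rep x0 [set x | A x /\ g x = v].
have hr v : (g @` A) v -> A (r v) /\ g (r v) = v.
  case => x Ax <-; apply: (@repP _ x0 [set y | A y /\ g y = g x]); by exists x.
have -> : f @` A = (f \o r) @` (g @` A).
  rewrite eqEsubset; split => u /=.
  - case=> x Ax <-; exists (g x); first by exists x.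
    have [Ar e] := hr (g x) (ex_intro2 _ _ x Ax erefl).
    by rewrite /=; apply/(hk _ _ Ar Ax).
  - case=> v gv <-; have [Ar _] := hr v gv; by exists (r v).
apply: inj_card_eq => v w; rewrite !in_setE => gv gw /= e.
have [Av ev] := hr v gv; have [Aw ew] := hr w gw.
by rewrite -ev -ew; apply/(hk _ _ Av Aw).
Qed.


Ltac gs := repeat progress rewrite ?XginvM ?XginvK ?gmulA ?XmulgK ?XmulgKV ?gmulV ?XmulgV ?gmul1 ?Xmulg1 ?Xginv1.

Section Sub.
Variables (G : grp) (S : set G).
Hypothesis hS : is_subgroup S.
Lemma ZS1 : S gone. Proof. by case: hS. Qed.
Lemma ZSM x y : S x -> S y -> S (gmul x y). Proof. by case: hS => _ []; auto. Qed.
Lemma ZSV x : S x -> S (ginv x). Proof. by case: hS => _ []; auto. Qed.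
Lemma ZSVE x : S (ginv x) -> S x. Proof. by move/ZSV; rewrite XginvK. Qed.
Lemma ZlcosetP a y : lcoset a S y <-> S (gmul (ginv a) y).
Proof.
split; first by case=> h Sh <-; rewrite XmulKg.
by move=> Sy; exists (gmul (ginv a) y) => //; rewrite XmulKVg.
Qed.
Lemma Zlcoset_eq a b : lcoset a S = lcoset b S <-> S (gmul (ginv b) a).
Proof.
split.
  move=> e; apply/ZlcosetP; rewrite -e; apply/ZlcosetP; rewrite gmulV; exact: ZS1.
move=> Sba; rewrite eqEsubset; split => y /ZlcosetP Sy; apply/ZlcosetP.
  by rewrite -(XmulKVg a y) gmulA; apply: ZSM.
rewrite -(XmulKVg b y) gmulA; apply: ZSM => //.
by rewrite -(XginvK b) -XginvM; apply: ZSV.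
Qed.
Lemma Zlcoset_self a : lcoset a S a. Proof. by apply/ZlcosetP; rewrite gmulV; exact: ZS1. Qed.
Lemma ZS_conj h y : S h -> S y -> S (gmul h (gmul y (ginv h))).
Proof. by move=> Sh Sy; apply: ZSM => //; apply: ZSM => //; apply: ZSV. Qed.
End Sub.



Definition gconj (F G : grp) (h : G) (phi : F -> G) := fun f => gmul h (gmul (phi f) (ginv h)).

Section Main.
Variables (F G : grp) (deg : F -> int) (H : set G).
Hypothesis hdeg : is_degree deg.
Hypothesis hH : is_subgroup H.

Lemma degM x y : deg (gmul x y) = (deg x + deg y)%R. Proof. by case: hdeg. Qed.
Lemma deg1 : deg gone = 0%R.
Proof. by have := degM gone gone; rewrite gmul1 => /eqP; rewrite -subr_eq addrN eq_sym => /eqP. Qed.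
Lemma degV x : deg (ginv x) = (- deg x)%R.
Proof. by apply/eqP; rewrite -(addrK (deg x) (deg (ginv x))) -degM gmulV deg1 sub0r. Qed.
Lemma deg_pw y z : deg (pw y z) = (z * deg y)%R.
Proof.
elim/int_ind2: z => [|z IH|z IH]; first by rewrite pw0 deg1 mul0r.
  by rewrite pwS degM IH mulrDl mul1r.
by rewrite pwP degM degV IH mulrBl mul1r.
Qed.

Variable f1 : F.
Hypothesis hf1 : deg f1 = 1%R.

Lemma deg_ind (P : F -> Prop) : (forall f, deg f = 0%R -> P f) ->
  (forall f, P f -> P (gmul f f1)) -> (forall f, P f -> P (gmul f (ginv f1))) -> forall f, P f.
Proof.
move=> P0 Ps Pp; suff: forall z f, deg f = z -> P f by move=> h f; exact: h.
elim/int_ind2 => [|z IH|z IH] f df; first exact: P0.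
  rewrite -(XmulgKV f1 f); apply: Ps; apply: IH.
  by rewrite degM degV hf1 df addrK.
rewrite -(XmulgK f1 f); apply: Pp; apply: IH.
by rewrite degM hf1 df subrK.
Qed.

Lemma hom_uniq (chi psi : F -> G) : is_hom chi -> is_hom psi ->
  (forall f, deg f = 0%R -> chi f = psi f) -> chi f1 = psi f1 -> chi = psi.
Proof.
move=> hc hp e0 e1; apply: funext; apply: (@deg_ind (fun f => chi f = psi f)) => // f IH.
  by rewrite hc hp; congr gmul.
by rewrite hc hp (XhomV hc) (XhomV hp) IH e1.
Qed.

Lemma core_sub (phi : F -> G) : is_hom phi -> is_subgroup (phi_core deg H phi).
Proof.
move=> hp; split; [|split].
- split => [f|f _]; first by rewrite gmul1 XmulgV; exact: (ZS1 hH).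
  by rewrite gmul1 Xmulg1.
- move=> x y [hx cx] [hy cy]; split => [f|f f0].
    have -> : gmul (phi f) (gmul (gmul x y) (ginv (phi f))) = gmul (gmul (phi f) (gmul x (ginv (phi f)))) (gmul (phi f) (gmul y (ginv (phi f)))) by gs.
    exact: (ZSM hH (hx f) (hy f)).
  by rewrite -gmulA (cy f f0) gmulA (cx f f0) -gmulA.
- move=> x [hx cx]; split => [f|f f0].
    have -> : gmul (phi f) (gmul (ginv x) (ginv (phi f))) = ginv (gmul (phi f) (gmul x (ginv (phi f)))) by gs.
    exact: (ZSV hH (hx f)).
  by apply: (@Xcancl _ _ _ x); rewrite XmulKVg gmulA cx // XmulgK.
Qed.

Lemma core_conj1 (phi : F -> G) (h c : G) : H h -> phi_core deg H phi c ->
  phi_core deg H (gconj h phi) (gmul h (gmul c (ginv h))).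
Proof.
move=> Hh [hc cc]; split => [f|f f0]; rewrite /gconj.
  have -> : gmul (gmul h (gmul (phi f) (ginv h))) (gmul (gmul h (gmul c (ginv h))) (ginv (gmul h (gmul (phi f) (ginv h))))) = gmul h (gmul (gmul (phi f) (gmul c (ginv (phi f)))) (ginv h)) by gs.
  exact: (ZS_conj hH Hh (hc f)).
gs; rewrite -(gmulA h c) (cc f f0); by gs.
Qed.

Lemma gconjK (phi : F -> G) (h : G) : gconj (ginv h) (gconj h phi) = phi.
Proof. by apply: funext => f; rewrite /gconj; gs. Qed.
Lemma gconj_hom (phi : F -> G) (h : G) : is_hom phi -> is_hom (gconj h phi).
Proof. by move=> hp x y; rewrite /gconj hp; gs. Qed.

Lemma core_conj (phi : F -> G) (h x : G) : H h -> phi_core deg H (gconj h phi) x ->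
  phi_core deg H phi (gmul (ginv h) (gmul x h)).
Proof.
move=> Hh cx; have := core_conj1 (ZSV hH Hh) cx; by rewrite gconjK XginvK.
Qed.

Lemma tail_eq (psi chi : F -> G) : hom_tail deg H psi = hom_tail deg H chi <->
  (forall f, deg f = 0%R -> psi f = chi f) /\ (forall f, lcoset (psi f) H = lcoset (chi f) H).
Proof.
split.
- rewrite /hom_tail => e; have /= e1 := congr1 fst e; have /= e2 := congr1 snd e; split => [f f0|f].
    exact: (congr1 (fun g => g (exist _ f f0)) e1).
  exact: (congr1 (fun g => g f) e2).
- case=> e1 e2; rewrite /hom_tail; congr pair; apply: funext; [case=> f f0 /=; exact: e1 | move=> f; exact: e2].
Qed.

Lemma similar_tail (phi psi : F -> G) : similar_hom deg H phi psi ->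
  exists2 h, H h & hom_tail deg H psi = hom_tail deg H (gconj h phi).
Proof.
case=> h Hh [e1 e2]; exists h => //; apply/tail_eq; split => f.
  by move=> f0; exact: e1.
rewrite e2 /gconj; apply/(Zlcoset_eq hH); by gs.
Qed.

Lemma conj_similar (phi : F -> G) (h : G) : H h -> similar_hom deg H phi (gconj h phi).
Proof.
move=> Hh; exists h => //; split => // f.
apply/(Zlcoset_eq hH); rewrite /gconj; gs; exact: (ZSV hH Hh).
Qed.

Lemma tail_conj_eq (phi : F -> G) (h k : G) : is_hom phi -> H h -> H k ->
  (hom_tail deg H (gconj h phi) = hom_tail deg H (gconj k phi) <->
   phi_core deg H phi (gmul (ginv k) h)).
Proof.
move=> hp Hh Hk; rewrite tail_eq; split.
- case=> e1 e2; split => [f|f f0].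
    have := e2 (ginv f); rewrite /gconj (XhomV hp); move/(Zlcoset_eq hH) => Hy.
    have := ZSM hH (ZSM hH (ZSV hH Hk) Hy) Hh; by gs.
  have e := e1 f f0; rewrite /gconj in e.
  transitivity (gmul (ginv k) (gmul (gmul h (gmul (phi f) (ginv h))) h)); first by gs.
  rewrite e; by gs.
- case=> [cA cB]; split => [f f0|f].
    rewrite /gconj.
    transitivity (gmul k (gmul (gmul (gmul (ginv k) h) (phi f)) (ginv h))); first by gs.
    rewrite (cB f f0); by gs.
  apply/(Zlcoset_eq hH); rewrite /gconj.
  have := ZSM hH (ZSM hH Hk (cA (ginv f))) (ZSV hH Hh); rewrite (XhomV hp); by gs.
Qed.

Lemma pw_oppS (a : F) m : pw a (- (m + 1))%R = gmul (ginv a) (pw a (- m)%R).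
Proof. by rewrite opprD addrC pwD pwN1. Qed.
Lemma pw_oppP (a : F) m : pw a (- (m - 1))%R = gmul a (pw a (- m)%R).
Proof. by rewrite opprB pwD pw1. Qed.

Definition ext (phi : F -> G) (x : G) : F -> G := fun f =>
  gmul (phi (gmul f (pw f1 (- deg f)%R))) (pw (gmul (phi f1) x) (deg f)).

Section Ext.
Variables (phi : F -> G) (x : G).
Hypothesis hp : is_hom phi.
Hypothesis cx : phi_core deg H phi x.

Lemma cxA f : H (gmul (phi f) (gmul x (ginv (phi f)))). Proof. by case: cx. Qed.
Lemma cxB f : deg f = 0%R -> gmul x (phi f) = gmul (phi f) x. Proof. move=> f0; case: cx => _ h; exact: (h f f0). Qed.
Lemma cxB' f : deg f = 0%R -> gmul (ginv x) (phi f) = gmul (phi f) (ginv x).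
Proof. by move=> f0; apply: (@Xcancl _ _ _ x); rewrite XmulKVg gmulA cxB // XmulgK. Qed.

Lemma degc1 k : deg k = 0%R -> deg (gmul f1 (gmul k (ginv f1))) = 0%R.
Proof. by move=> k0; rewrite !degM degV k0 add0r addrN. Qed.
Lemma degc2 k : deg k = 0%R -> deg (gmul (ginv f1) (gmul k f1)) = 0%R.
Proof. by move=> k0; rewrite !degM degV k0 add0r addNr. Qed.

Lemma comm_step k : deg k = 0%R ->
  gmul (gmul (phi f1) x) (phi k) = gmul (phi (gmul f1 (gmul k (ginv f1)))) (gmul (phi f1) x).
Proof. by move=> k0; rewrite -gmulA (cxB k0) !hp (XhomV hp); gs. Qed.

Lemma comm_stepV k : deg k = 0%R ->
  gmul (ginv (gmul (phi f1) x)) (phi k) = gmul (phi (gmul (ginv f1) (gmul k f1))) (ginv (gmul (phi f1) x)).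
Proof.
move=> k0; have k1 := degc2 k0.
transitivity (gmul (gmul (ginv x) (phi (gmul (ginv f1) (gmul k f1)))) (ginv (phi f1))).
  by rewrite !hp (XhomV hp); gs.
by rewrite (cxB' k1); gs.
Qed.

Lemma ext_conj m k : deg k = 0%R ->
  gmul (pw (gmul (phi f1) x) m) (phi k) =
  gmul (phi (gmul (gmul (pw f1 m) k) (pw f1 (- m)%R))) (pw (gmul (phi f1) x) m).
Proof.
elim/int_ind2: m k => [|m IH|m IH] k k0.
- by rewrite oppr0 !pw0; gs.
- have e : gmul (gmul (pw f1 (m+1)%R) k) (pw f1 (-(m+1))%R) = gmul (gmul (pw f1 m) (gmul f1 (gmul k (ginv f1)))) (pw f1 (-m)%R).
    by rewrite pw_oppS pwS; gs.
  by rewrite pwS -gmulA comm_step // gmulA IH ?degc1 // e -[LHS]gmulA.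
- have e : gmul (gmul (pw f1 (m-1)%R) k) (pw f1 (-(m-1))%R) = gmul (gmul (pw f1 m) (gmul (ginv f1) (gmul k f1))) (pw f1 (-m)%R).
    by rewrite pw_oppP pwP; gs.
  by rewrite pwP -gmulA comm_stepV // gmulA IH ?degc2 // e -[LHS]gmulA.
Qed.

Lemma ext_hom : is_hom (ext phi x).
Proof.
move=> f g; rewrite /ext degM.
have k0 : deg (gmul g (pw f1 (- deg g)%R)) = 0%R by rewrite degM deg_pw hf1 mulr1 addrN.
rewrite pwD.
have -> : forall A B C D : G, gmul (gmul A B) (gmul C D) = gmul (gmul A (gmul B C)) D.
  by move=> *; rewrite !gmulA.
rewrite ext_conj // [in RHS]gmulA -hp [LHS]gmulA; congr (gmul (gmul (phi _) _) _).
have h1 : gmul (pw f1 (- deg f)%R) (pw f1 (deg f)) = gone by rewrite -pwD addNr pw0.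
rewrite !gmulA -(gmulA f (pw f1 (- deg f)%R)) h1 Xmulg1 -!gmulA -!pwD.
by rewrite opprD addrC.
Qed.

Lemma ext0 f : deg f = 0%R -> ext phi x f = phi f.
Proof. by move=> f0; rewrite /ext f0 oppr0 pw0 !Xmulg1. Qed.
Lemma ext_f1 : ext phi x f1 = gmul (phi f1) x.
Proof. by rewrite /ext hf1 pwN1 pw1 XmulgV (Xhom1 hp) gmul1. Qed.

Lemma ext_coset f : H (gmul (ext phi x f) (ginv (phi f))).
Proof.
move: f; apply: (@deg_ind (fun f => H (gmul (ext phi x f) (ginv (phi f))))) => f.
- by move=> f0; rewrite ext0 // XmulgV; exact: (ZS1 hH).
- move=> IH; rewrite ext_hom ext_f1.
  have -> : gmul (gmul (ext phi x f) (gmul (phi f1) x)) (ginv (phi (gmul f f1))) = gmul (gmul (ext phi x f) (ginv (phi f))) (gmul (phi (gmul f f1)) (gmul x (ginv (phi (gmul f f1))))) by rewrite !hp; gs.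
  exact: (ZSM hH IH (cxA _)).
- move=> IH; rewrite ext_hom (XhomV ext_hom) ext_f1.
  have -> : gmul (gmul (ext phi x f) (ginv (gmul (phi f1) x))) (ginv (phi (gmul f (ginv f1)))) = gmul (gmul (ext phi x f) (ginv (phi f))) (ginv (gmul (phi f) (gmul x (ginv (phi f))))) by rewrite !hp (XhomV hp); gs.
  exact: (ZSM hH IH (ZSV hH (cxA _))).
Qed.

Lemma ext_lcoset f : lcoset (ext phi x f) H = lcoset (phi f) H.
Proof.
apply/(Zlcoset_eq hH); have := ZSV hH (ext_coset (ginv f)).
by rewrite (XhomV ext_hom) (XhomV hp); gs.
Qed.

Lemma tail_ext : hom_tail deg H (ext phi x) = hom_tail deg H phi.
Proof. by apply/tail_eq; split; [move=> f f0; exact: ext0 | exact: ext_lcoset]. Qed.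
End Ext.

Lemma fiber_inv (phi chi : F -> G) : is_hom phi -> is_hom chi ->
  hom_tail deg H chi = hom_tail deg H phi ->
  phi_core deg H phi (gmul (ginv (phi f1)) (chi f1)) /\
  chi = ext phi (gmul (ginv (phi f1)) (chi f1)).
Proof.
move=> hp hc /tail_eq [e0 ec].
have cB : forall g, deg g = 0%R -> gmul (gmul (ginv (phi f1)) (chi f1)) (phi g) = gmul (phi g) (gmul (ginv (phi f1)) (chi f1)).
  move=> g g0.
  have E : gmul (chi (gmul f1 (gmul g (ginv f1)))) (chi f1) = gmul (chi f1) (chi g).
    by rewrite -!hc; congr chi; gs.
  rewrite (e0 _ (degc1 g0)) (e0 _ g0) !hp (XhomV hp) in E.
  rewrite -gmulA -E; by gs.
have hcos : forall y, H (gmul (chi y) (ginv (phi y))).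
  move=> y; have := ZSV hH (proj1 (Zlcoset_eq hH _ _) (ec (ginv y))).
  by rewrite (XhomV hc) (XhomV hp); gs.
have cA : forall f, H (gmul (phi f) (gmul (gmul (ginv (phi f1)) (chi f1)) (ginv (phi f)))).
  move=> f; have := ZSM hH (ZSV hH (hcos (gmul f (ginv f1)))) (hcos f).
  rewrite hc hp (XhomV hc) (XhomV hp); by gs.
have cx : phi_core deg H phi (gmul (ginv (phi f1)) (chi f1)) by split.
split => //.
apply: hom_uniq => //; first exact: ext_hom.
  by move=> f f0; rewrite ext0 // e0.
by rewrite ext_f1 //; gs.
Qed.

Lemma coreH (psi : F -> G) y : is_hom psi -> phi_core deg H psi y -> H y.
Proof. move=> hp [hy _]; have := hy gone; by rewrite (Xhom1 hp) gmul1 Xginv1 Xmulg1. Qed.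

Lemma tail_similar (phi psi : F -> G) h : H h ->
  hom_tail deg H psi = hom_tail deg H (gconj h phi) -> similar_hom deg H phi psi.
Proof.
move=> Hh /tail_eq [e0 ec]; exists h => //; split; first exact: e0.
move=> f; rewrite ec.
apply/(Zlcoset_eq hH); rewrite /gconj; gs; exact: (ZSV hH Hh).
Qed.

Section Final.
Variable Phi : set (F -> G).
Hypothesis hPhom : forall phi, Phi phi -> is_hom phi.
Hypothesis hI : forall h phi, H h -> Phi phi -> Phi (fun f => gmul (ginv h) (gmul (phi f) h)).
Hypothesis hII : forall phi h psi, Phi phi -> phi_core deg H phi h -> is_hom psi ->
     (forall f, deg f = 0%R -> psi f = phi f) ->
     (exists f1, deg f1 = 1%R /\ psi f1 = gmul (phi f1) h) ->
     Phi psi.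
Variable phi : F -> G.
Hypothesis Pphi : Phi phi.

Let hp := hPhom Pphi.
Let csub := core_sub hp.

Lemma Pconj h : H h -> Phi (gconj h phi).
Proof. move=> Hh; have := hI (ZSV hH Hh) Pphi; by rewrite XginvK. Qed.

Lemma Pext psi y : Phi psi -> phi_core deg H psi y -> Phi (ext psi y).
Proof.
move=> Pp cy; apply: (hII Pp cy); first exact: ext_hom (hPhom Pp) cy.
  by move=> f f0; exact: ext0.
by exists f1; split => //; exact: ext_f1 (hPhom Pp).
Qed.

Lemma claim2 :
  [set hom_tail deg H psi | psi in [set psi | Phi psi /\ similar_hom deg H phi psi]]
      #= [set lcoset x (phi_core deg H phi) | x in H].
Proof.
have -> : [set hom_tail deg H psi | psi in [set psi | Phi psi /\ similar_hom deg H phi psi]]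
   = (fun h => hom_tail deg H (gconj h phi)) @` H.
  rewrite eqEsubset; split => T.
    case=> psi [Ppsi sim] <-; have [h Hh e] := similar_tail sim.
    by exists h => //; rewrite e.
  case=> h Hh <-; exists (gconj h phi) => //; split; [exact: Pconj | exact: conj_similar].
apply: img_kernel => h k Hh Hk.
have := Zlcoset_eq csub h k; have := tail_conj_eq hp Hh Hk; tauto.
Qed.

Lemma claim3 psi : Phi psi -> similar_hom deg H phi psi ->
  [set chi | Phi chi /\ hom_tail deg H chi = hom_tail deg H psi] #= phi_core deg H phi.
Proof.
move=> Ppsi sim; have [h0 Hh0 e] := similar_tail sim.
have hp0 := gconj_hom h0 hp.
have -> : [set chi | Phi chi /\ hom_tail deg H chi = hom_tail deg H psi] =
  (fun c => ext (gconj h0 phi) (gmul h0 (gmul c (ginv h0)))) @` phi_core deg H phi.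
  rewrite eqEsubset; split => chi.
    case=> Pchi et; rewrite e in et.
    have [cx echi] := fiber_inv hp0 (hPhom Pchi) et.
    exists (gmul (ginv h0) (gmul (gmul (ginv (gconj h0 phi f1)) (chi f1)) h0)).
      exact: core_conj Hh0 cx.
    by rewrite [RHS]echi; congr (ext _ _); gs.
  case=> c cc <-; have cx := core_conj1 Hh0 cc; split.
    exact: Pext (Pconj Hh0) cx.
  by rewrite (tail_ext hp0 cx) e.
apply: inj_card_eq => c d; rewrite !in_setE => cc cd ecd.
have := congr1 (fun g => g f1) ecd; rewrite /= !(ext_f1 _ hp0) => /Xcancl/Xcancl/Xcancr.
by [].
Qed.

Definition rc h := rep gone (lcoset h (phi_core deg H phi)).
Lemma rc_eq h k : lcoset h (phi_core deg H phi) = lcoset k (phi_core deg H phi) -> rc h = rc k.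
Proof. by rewrite /rc => ->. Qed.
Lemma rP h : phi_core deg H phi (gmul (ginv h) (rc h)).
Proof.
apply: (proj1 (ZlcosetP _ h (rc h))); apply: (@repP _ gone (lcoset h (phi_core deg H phi))).
by exists h; exact: (Zlcoset_self csub).
Qed.
Lemma rE h : lcoset (rc h) (phi_core deg H phi) = lcoset h (phi_core deg H phi).
Proof. by apply/(Zlcoset_eq csub); exact: rP. Qed.
Lemma rH h : H h -> H (rc h).
Proof. by move=> Hh; rewrite -(XmulKVg h (rc h)); exact: (ZSM hH Hh (coreH hp (rP h))). Qed.
Lemma rI h : phi_core deg H phi (gmul (ginv (rc h)) h).
Proof. by have := ZSV csub (rP h); rewrite XginvM XginvK. Qed.
Lemma cxh h : H h -> phi_core deg H (gconj (rc h) phi) (gmul h (ginv (rc h))).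
Proof. by move=> Hh; have := core_conj1 (rH Hh) (rI h); gs. Qed.

Lemma claim1 : [set psi | Phi psi /\ similar_hom deg H phi psi] #= H.
Proof.
pose M h := ext (gconj (rc h) phi) (gmul h (ginv (rc h))).
have -> : [set psi | Phi psi /\ similar_hom deg H phi psi] = M @` H.
  rewrite eqEsubset; split => chi.
  - case=> Pchi sim; have [h0 Hh0 e] := similar_tail sim.
    have e' : hom_tail deg H (gconj h0 phi) = hom_tail deg H (gconj (rc h0) phi).
      by apply/(tail_conj_eq hp Hh0 (rH Hh0)); exact: rI.
    rewrite e' in e.
    have hpr := gconj_hom (rc h0) hp.
    have [cx echi] := fiber_inv hpr (hPhom Pchi) e.
    set x := gmul (ginv (gconj (rc h0) phi f1)) (chi f1) in cx echi.
    exists (gmul x (rc h0)).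
      exact: (ZSM hH (coreH hpr cx) (rH Hh0)).
    have el : lcoset (gmul x (rc h0)) (phi_core deg H phi) = lcoset h0 (phi_core deg H phi).
      rewrite -[in RHS]rE; apply/(Zlcoset_eq csub); exact: (core_conj (rH Hh0) cx).
    rewrite /M (rc_eq el) [RHS]echi; congr (ext _ _); by rewrite XmulgK.
  - case=> h Hh <-; split.
      exact: Pext (Pconj (rH Hh)) (cxh Hh).
    apply: (tail_similar (rH Hh)); exact: tail_ext (gconj_hom _ hp) (cxh Hh).
apply: inj_card_eq => h k; rewrite !in_setE => Hh Hk ehk.
have et := congr1 (hom_tail deg H) ehk.
rewrite /M (tail_ext (gconj_hom _ hp) (cxh Hh)) (tail_ext (gconj_hom _ hp) (cxh Hk)) in et.
have := (proj1 (tail_conj_eq hp (rH Hh) (rH Hk))) et.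
move/(Zlcoset_eq csub); rewrite !rE => /rc_eq erk.
have := congr1 (fun g => g f1) ehk.
rewrite /M /= (ext_f1 _ (gconj_hom _ hp)) (ext_f1 _ (gconj_hom _ hp)) erk => /Xcancl/Xcancr.
by [].
Qed.
End Final.
End Main.

Theorem mainTheorem11 (F G : grp) (deg : F -> int) (H : set G) (Phi : set (F -> G)) :
  is_degree deg ->
  is_subgroup H ->
  (forall phi, Phi phi -> is_hom phi) ->
  (* (I) *)
  (forall h phi, H h -> Phi phi -> Phi (fun f => gmul (ginv h) (gmul (phi f) h))) ->
  (* (II) *)
  (forall phi h psi, Phi phi -> phi_core deg H phi h -> is_hom psi ->
     (forall f, deg f = 0%R -> psi f = phi f) ->
     (exists f1, deg f1 = 1%R /\ psi f1 = gmul (phi f1) h) ->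
     Phi psi) ->
  forall phi, Phi phi ->
    [set psi | Phi psi /\ similar_hom deg H phi psi] #= H /\
    [set hom_tail deg H psi | psi in [set psi | Phi psi /\ similar_hom deg H phi psi]]
      #= [set lcoset x (phi_core deg H phi) | x in H] /\
    (forall psi, Phi psi -> similar_hom deg H phi psi ->
       [set chi | Phi chi /\ hom_tail deg H chi = hom_tail deg H psi] #= phi_core deg H phi).
Proof.
move=> hdeg hH hPhom hI hII phi Pphi.
have [f1 hf1] := (proj2 hdeg) 1%R.
split; first exact: (claim1 hdeg hH hf1 hPhom hI hII Pphi).
split; first by apply: claim2; eauto.
move=> psi Ppsi sim; exact: (claim3 hdeg hH hf1 hPhom hI hII Pphi Ppsi sim).
Qed.
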